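(* Let $\mathcal A_+,\mathcal A_-\subseteq\mathbb R^n$ be disjoint finite sets such that $(\mathcal A_+,\mathcal A_-)$ is an extended circuit and $\mathcal A_-\neq\varnothing$. Let $\Delta=\operatorname{conv}(\mathcal A_+)$ and, for $b\in\mathcal A_-$, let $\Gamma_{b,\Delta}$ be the unique face of $\Delta$ with $b\in\operatorname{relint}(\Gamma_{b,\Delta})$. If $f\in\mathcal S(\mathcal A_+,\mathcal A_-)$ satisfies $\operatorname{Sing}_{>0}(f)\neq\varnothing$, then $f=\sum_{b\in\mathcal A_-}q_b$ where each $q_b$ is a copositive circuit signomial with signed support $(\mathcal A_+\cap\Gamma_{b,\Delta},\{b\})$; in particular $f$ is SONC.
   Context: A signomial with signed support $(\mathcal B_+,\mathcal B_-)$ (disjoint finite subsets of $\mathbb R^n$) is $f(x)=\sum_{a\in\mathcal B_+}c_ax^a-\sum_{b\in\mathcal B_-}c_bx^b$ on $\mathbb R^n_{>0}$ with all $c_a,c_b>0$; $\mathcal S(\mathcal B_+,\mathcal B_-)$ is the set of these. With $\mathcal B=\mathcal B_+\cup\mathcal B_-$, $(\mathcal B_+,\mathcal B_-)$ is an extended circuit if either $\#\mathcal B=\#\mathcal B_+=1$ or $\operatorname{conv}(\mathcal B)$ is a simplex with vertex set $\mathcal B_+$; it is a circuit if either $\#\mathcal B=\#\mathcal B_+=1$ or it is an extended circuit with $\#\mathcal B_-=1$ and $\mathcal B_-\subseteq\operatorname{relint}(\operatorname{conv}(\mathcal B_+))$. A circuit signomial has circuit signed support. A signomial is SONC if it is a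 finite sum of circuit signomials that are copositive (nonnegative on $\mathbb R^n_{>0}$). $\operatorname{Sing}_{>0}(f)$ is the set of $x\in\mathbb R^n_{>0}$ with $f(x)=x_1\partial_{x_1}f(x)=\dots=x_n\partial_{x_n}f(x)=0$. *)

(* Defs.v *)
From HB Require Import structures.
From mathcomp Require Import all_boot all_order all_algebra.
From mathcomp Require Import finmap.
From mathcomp Require Import all_classical all_reals all_analysis.
Set Implicit Arguments. Unset Strict Implicit. Unset Printing Implicit Defensive.
Import Order.TTheory GRing.Theory Num.Theory.
Local Open Scope classical_set_scope.
Local Open Scope ring_scope.

Section Signomials.
Variables (R : realType) (n : nat).
Notation V := 'rV[R]_n.

Definition pos_orthant : set V := [set x | forall i, 0 < x 0 i].

Definition mono (x a : V) : R := \prod_(i < n) (x 0 i) `^ (a 0 i).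

Definition dotv (w x : V) : R := \sum_(i < n) w 0 i * x 0 i.

Definition signomial (Bp Bm : {fset V}) (f : V -> R) : Prop :=
  exists c : V -> R,
    (forall a, a \in (Bp `|` Bm)%fset -> 0 < c a) /\
    forall x, pos_orthant x ->
      f x = \sum_(a <- Bp) c a * mono x a - \sum_(b <- Bm) c b * mono x b.

Definition conv_hull (B : {fset V}) : set V :=
  [set x | exists l : V -> R, (forall a, a \in B -> 0 <= l a) /\
     \sum_(a <- B) l a = 1 /\ x = \sum_(a <- B) l a *: a].

Definition aff_indep (B : {fset V}) : Prop :=
  forall l : V -> R, \sum_(a <- B) l a *: a = 0 -> \sum_(a <- B) l a = 0 ->
    forall a, a \in B -> l a = 0.

Definition aff (S : set V) : set V :=
  [set x | exists m (p : 'I_m -> V) (l : 'I_m -> R), (forall i, S (p i)) /\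
     \sum_(i < m) l i = 1 /\ x = \sum_(i < m) l i *: p i].

Definition relint (S : set V) : set V :=
  [set x | S x /\ exists e : R, 0 < e /\
     forall y, aff S y -> (forall i, `|y 0 i - x 0 i| < e) -> S y].

(* faces of a polytope P (possibly empty, possibly P itself) *)
Definition face (P G : set V) : Prop :=
  exists (w : V) (c : R), (forall x, P x -> dotv w x <= c) /\
    G = [set x | P x /\ dotv w x = c].

Definition simplex_with_vertices (B Bp : {fset V}) : Prop :=
  Bp != fset0 /\ aff_indep Bp /\ conv_hull B = conv_hull Bp.

Definition ext_circuit (Bp Bm : {fset V}) : Prop :=
  (Bp `&` Bm)%fset = fset0 /\
  ((#|` (Bp `|` Bm)%fset| == 1)%N && (#|` Bp| == 1)%N
   \/ simplex_with_vertices (Bp `|` Bm)%fset Bp).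

Definition circuit (Bp Bm : {fset V}) : Prop :=
  (Bp `&` Bm)%fset = fset0 /\
  ((#|` (Bp `|` Bm)%fset| == 1)%N && (#|` Bp| == 1)%N
   \/ (ext_circuit Bp Bm /\ (#|` Bm| == 1)%N /\
       forall b, b \in Bm -> relint (conv_hull Bp) b)).

Definition copositive (f : V -> R) : Prop := forall x, pos_orthant x -> 0 <= f x.

Definition circuit_signomial (Bp Bm : {fset V}) (f : V -> R) : Prop :=
  circuit Bp Bm /\ signomial Bp Bm f.

Definition SONC (f : V -> R) : Prop :=
  exists m (Bps Bms : 'I_m -> {fset V}) (q : 'I_m -> V -> R),
    (forall j, circuit_signomial (Bps j) (Bms j) (q j) /\ copositive (q j)) /\
    forall x, pos_orthant x -> f x = \sum_(j < m) q j x.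

Definition upd (x : V) (i : 'I_n) (t : R) : V :=
  \row_(j < n) (if j == i then t else x 0 j).

Definition xdiff (f : V -> R) (i : 'I_n) (x : V) : R :=
  x 0 i * derive1 (fun t => f (upd x i t)) (x 0 i).

Definition Sing_pos (f : V -> R) : set V :=
  [set x | pos_orthant x /\ f x = 0 /\ forall i, xdiff f i x = 0].

End Signomials.

Definition fsetIs (R : realType) (n : nat) (A : {fset 'rV[R]_n}) (G : set 'rV[R]_n)
  : {fset 'rV[R]_n} := [fset a | a in A & asbool (G a)]%fset.

(* Main.v *)
Require Import Defs.
From HB Require Import structures.
From mathcomp Require Import all_boot all_order all_algebra.
From mathcomp Require Import finmap.
From mathcomp Require Import all_classical all_reals all_analysis.
From mathcomp Require Import ring lra.
Import Order.TTheory GRing.Theory Num.Theory.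
Import numFieldNormedType.Exports.
Local Open Scope classical_set_scope.
Local Open Scope ring_scope.
Set Implicit Arguments. Unset Strict Implicit. Unset Printing Implicit Defensive.

Section Aux.
Variables (R : realType) (n : nat).
Notation V := 'rV[R]_n.

Lemma in_fsetIs (A : {fset V}) (G : set V) a :
  (a \in fsetIs A G) = (a \in A) && `[< G a >].
Proof. by rewrite /fsetIs !inE. Qed.

Lemma coord_sum (T : Type) (s : seq T) (F : T -> R) (v : T -> V) i :
  (\sum_(a <- s) F a *: v a) 0 i = \sum_(a <- s) F a * v a 0 i.
Proof. by rewrite summxE; apply: eq_bigr => a _; rewrite !mxE. Qed.

Lemma dotvC (u v : V) : dotv u v = dotv v u.
Proof. by rewrite /dotv; apply: eq_bigr => i _; rewrite mulrC. Qed.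

Lemma dotv_suml (T : Type) (s : seq T) (F : T -> R) (v : T -> V) x :
  dotv (\sum_(a <- s) F a *: v a) x = \sum_(a <- s) F a * dotv (v a) x.
Proof.
rewrite /dotv; under eq_bigr do rewrite coord_sum big_distrl.
rewrite exchange_big /=; apply: eq_bigr => a _; rewrite big_distrr /=.
by apply: eq_bigr => i _; rewrite mulrA.
Qed.

Lemma dotvBl (u v x : V) : dotv (u - v) x = dotv u x - dotv v x.
Proof. by rewrite /dotv -sumrB; apply: eq_bigr => i _; rewrite !mxE mulrBl. Qed.

Definition lnv (x : V) : V := \row_i ln (x 0 i).

Lemma mono_exp (x a : V) : pos_orthant x -> mono x a = expR (dotv a (lnv x)).
Proof.
move=> px; rewrite /mono /dotv expR_sum; apply: eq_bigr => i _.
by rewrite /powR gt_eqF ?px // mxE.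
Qed.

Lemma mono_gt0 (x a : V) : pos_orthant x -> 0 < mono x a.
Proof. by move=> px; rewrite mono_exp // expR_gt0. Qed.

Lemma jensen_exp (T : eqType) (s : seq T) (l t : T -> R) :
  (forall a, a \in s -> 0 <= l a) -> \sum_(a <- s) l a = 1 ->
  expR (\sum_(a <- s) l a * t a) <= \sum_(a <- s) l a * expR (t a).
Proof.
move=> l0 l1; set S := \sum_(a <- s) l a * t a.
have H : forall a, a \in s -> l a * (expR S * (1 + (t a - S))) <= l a * expR (t a).
  move=> a aS; apply: ler_wpM2l; first exact: l0.
  have -> : expR (t a) = expR S * expR (t a - S) by rewrite -expRD addrC subrK.
  by apply: ler_wpM2l; [exact: expR_ge0 | exact: expR_ge1Dx].
apply: le_trans (_ : \sum_(a <- s) l a * (expR S * (1 + (t a - S))) <= _).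
  under eq_bigr do rewrite mulrCA mulrDr mulr1 mulrBr.
  rewrite -big_distrr /= big_split /= sumrB -/S -big_distrl /= l1 mul1r subrr addr0.
  by rewrite mulr1.
by rewrite big_seq_cond [X in _ <= X]big_seq_cond; apply: ler_sum => a /andP[aS _]; apply: H.
Qed.

End Aux.
Section LA.
Variables (R : realType) (n : nat).
Notation V := 'rV[R]_n.

Lemma aff_solve (A : {fset V}) : aff_indep A ->
  forall v : V -> R, exists u : V, exists k : R, forall a, a \in A -> dotv u a + k = v a.
Proof.
move=> hA v.
set s : seq V := A.
have us : uniq s := fset_uniq A.
set m := size s.
pose Am : 'M[R]_(m, n) := \matrix_(i, j) (s`_i) 0 j.
pose M := row_mx Am (const_mx 1 : 'M[R]_(m, 1)).
have bigs : forall F : V -> R, \sum_(a <- A) F a = \sum_(i < m) F s`_i.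
  by move=> F; rewrite (big_nth 0) big_mkord.
have bigsV : forall F : V -> V, \sum_(a <- A) F a = \sum_(i < m) F s`_i.
  by move=> F; rewrite (big_nth 0) big_mkord.
have sin : forall i : 'I_m, s`_i \in A by move=> i; exact: mem_nth.
have nthE : forall i j : 'I_m, (s`_j == s`_i) = (j == i).
  by move=> i j; rewrite nth_uniq.
have freeM : row_free M.
  apply: inj_row_free => l.
  rewrite mul_mx_row -row_mx0 => /eq_row_mx [h1 h2].
  pose lam (a : V) := \sum_(j < m | s`_j == a) l 0 j.
  have lamE : forall i : 'I_m, lam s`_i = l 0 i.
    by move=> i; rewrite /lam (big_pred1 i) // => j; rewrite /= nthE.
  have := hA lam.
  rewrite bigsV bigs.
  under eq_bigr do rewrite lamE.
  under [X in _ -> X = 0 -> _]eq_bigr do rewrite lamE.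
  move=> H.
  have H0 : forall a, a \in A -> lam a = 0.
    apply: H.
      apply/rowP => j; rewrite coord_sum mxE.
      transitivity ((l *m Am) 0 j); last by rewrite h1 mxE.
      by rewrite mxE; apply: eq_bigr => i _; rewrite !mxE.
    transitivity ((l *m (const_mx 1 : 'M[R]_(m,1))) 0 0); last by rewrite h2 mxE.
    by rewrite mxE; apply: eq_bigr => i _; rewrite !mxE mulr1.
  apply/rowP => i; rewrite mxE -lamE; exact: H0.
have [B hB] := row_freeP freeM.
pose vc : 'cV[R]_m := \col_i v s`_i.
pose z := B *m vc.
have Mz : M *m z = vc by rewrite /z mulmxA hB mul1mx.
exists (\row_j (usubmx z) j 0), (dsubmx z 0 0).
move=> a aA.
have ia : (index a s < m)%N by rewrite index_mem.
have -> : a = s`_(Ordinal ia) by rewrite /= nth_index.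
have Mz' : Am *m usubmx z + (const_mx 1 : 'M[R]_(m,1)) *m dsubmx z = vc.
  by rewrite -mul_row_col vsubmxK.
have := congr1 (fun x : 'cV[R]_m => x (Ordinal ia) 0) Mz'.
rewrite !mxE => <-.
congr (_ + _).
  rewrite /dotv; apply: eq_bigr => j _; rewrite !mxE mulrC.
  by [].
by rewrite big_ord1 !mxE mul1r.
Qed.

End LA.
Section Deriv.
Variables (R : realType) (n : nat).
Notation V := 'rV[R]_n.

Lemma is_derive_bigseq (T : Type) (s : seq T) (h : T -> R -> R) (dh : T -> R) (x0 : R) :
  (forall a, is_derive x0 1 (h a) (dh a)) ->
  is_derive x0 1 (fun t => \sum_(a <- s) h a t) (\sum_(a <- s) dh a).
Proof.
move=> hd; elim: s => [|a s IH].
  have -> : (fun t : R => \sum_(a <- [::]) h a t) = cst 0.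
    by apply/funext => t; rewrite big_nil.
  by rewrite big_nil; exact: is_derive_cst.
have -> : (fun t : R => \sum_(b <- a :: s) h b t) = h a + (fun t => \sum_(b <- s) h b t).
  by apply/funext => t; rewrite big_cons.
rewrite big_cons; exact: is_deriveD.
Qed.

Definition Pm (x a : V) (i : 'I_n) := \prod_(j < n | j != i) x 0 j `^ a 0 j.

Lemma mono_upd (x a : V) i t : mono (upd x i t) a = t `^ (a 0 i) * Pm x a i.
Proof.
rewrite /mono (bigD1 i) //= mxE eqxx; congr (_ * _).
by apply: eq_bigr => j /negbTE ji; rewrite mxE ji.
Qed.

Lemma upd_id (x : V) i : upd x i (x 0 i) = x.
Proof. by apply/rowP => j; rewrite mxE; case: eqP => // ->. Qed.

Lemma xdiff_sig (Ap Am : {fset V}) (c : V -> R) (f : V -> R) (x : V) i :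
  (forall y, pos_orthant y -> f y = \sum_(a <- Ap) c a * mono y a - \sum_(b <- Am) c b * mono y b) ->
  pos_orthant x ->
  xdiff f i x = \sum_(a <- Ap) c a * (a 0 i * mono x a) - \sum_(b <- Am) c b * (b 0 i * mono x b).
Proof.
move=> hf px.
have xi0 : 0 < x 0 i := px i.
pose h (a : V) := (c a * Pm x a i) \*: (@powR R ^~ (a 0 i)).
pose dh (a : V) := (c a * Pm x a i) * (a 0 i * x 0 i `^ (a 0 i - 1)).
have hd : forall a, is_derive (x 0 i) 1 (h a) (dh a).
  move=> a; rewrite /h /dh -[X in is_derive _ _ _ X]/((c a * Pm x a i) *: (a 0 i * x 0 i `^ (a 0 i - 1))).
  exact/is_deriveZ/is_derive1_powR.
pose F := (fun t => \sum_(a <- Ap) h a t) - (fun t => \sum_(a <- Am) h a t).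
have dF : is_derive (x 0 i) 1 F (\sum_(a <- Ap) dh a - \sum_(a <- Am) dh a).
  by apply: is_deriveB; apply: is_derive_bigseq.
have nearF : \forall t \near (x 0 i : R), f (upd x i t) = F t.
  near=> t.
  have tpos : 0 < t by near: t; exact: lt_nbhsr.
  rewrite hf; last first.
    by move=> j; rewrite mxE; case: eqP => _ //; exact: px.
  rewrite /F; congr (_ - _); apply: eq_bigr => a _;
    by rewrite mono_upd /h /= [t `^ _ * _]mulrC mulrA.
rewrite /xdiff derive1E (near_eq_derive _ nearF) derive_val.
have monox : forall a, mono x a = x 0 i `^ a 0 i * Pm x a i.
  by move=> a; rewrite -{1}(upd_id x i) mono_upd.
have pw : forall r, x 0 i * x 0 i `^ (r - 1) = x 0 i `^ r.
  move=> r; rewrite mulrC -{2}(powRr1 (ltW xi0)) -powRD; first by rewrite subrK.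
  by rewrite (gt_eqF xi0) implybT.
rewrite mulrBr !big_distrr /=; congr (_ - _); apply: eq_bigr => a _;
  by rewrite /dh monox -(pw (a 0 i)); ring.

Unshelve. all: end_near.
Qed.
End Deriv.
Section Geo.
Variables (R : realType) (n : nat).
Notation V := 'rV[R]_n.

Lemma big_fset_one (U : zmodType) (B : {fset V}) a (F : V -> U) :
  a \in B -> (forall x, x \in B -> x != a -> F x = 0) -> \sum_(x <- B) F x = F a.
Proof.
move=> aB h; rewrite (big_fsetD1 a) //= big1_fset ?addr0 // => x.
by rewrite !inE => /andP[xa xB] _; exact: h.
Qed.

Lemma conv_mem (B : {fset V}) a : a \in B -> conv_hull B a.
Proof.
move=> aB; exists (fun x => (x == a)%:R); split; first by move=> x _; exact: ler0n.
split.
  by rewrite (big_fset_one (a := a)) ?eqxx // => x _ /negbTE ->.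
by rewrite (big_fset_one (a := a)) ?eqxx ?scale1r // => x _ /negbTE ->; rewrite scale0r.
Qed.

Lemma psum0 (s : seq V) (F : V -> R) : (forall x, x \in s -> 0 <= F x) ->
  \sum_(x <- s) F x = 0 -> forall x, x \in s -> F x = 0.
Proof.
move=> h0 hs x xs; move: hs; rewrite big_seq_cond => /eqP.
rewrite psumr_eq0; last by move=> i /andP[iS _]; exact: h0.
by move=> /allP /(_ x xs); rewrite xs /= => /eqP.
Qed.

Lemma dotv_sumr (s : seq V) (F : V -> R) (u : V) :
  dotv u (\sum_(a <- s) F a *: a) = \sum_(a <- s) F a * dotv u a.
Proof.
by rewrite dotvC dotv_suml; apply: eq_bigr => a _; rewrite dotvC.
Qed.

Lemma dotv_conv (s : seq V) (F : V -> R) (u : V) k :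
  \sum_(a <- s) F a = 1 ->
  dotv u (\sum_(a <- s) F a *: a) + k = \sum_(a <- s) F a * (dotv u a + k).
Proof.
move=> h1; rewrite dotv_sumr.
transitivity (\sum_(a <- s) F a * dotv u a + \sum_(a <- s) F a * k).
  by rewrite -big_distrl /= h1 mul1r.
by rewrite -big_split; apply: eq_bigr => a _; rewrite mulrDr.
Qed.

Lemma dotvBr (u y b : V) : dotv u (y - b) = dotv u y - dotv u b.
Proof. by rewrite dotvC dotvBl !(dotvC u). Qed.

Lemma bary_unique (A : {fset V}) (mu nu : V -> R) : aff_indep A ->
  \sum_(a <- A) mu a = \sum_(a <- A) nu a ->
  \sum_(a <- A) mu a *: a = \sum_(a <- A) nu a *: a ->
  forall a, a \in A -> mu a = nu a.
Proof.
move=> hA h1 h2 a aA; apply/eqP; rewrite -subr_eq0; apply/eqP.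
apply: (hA (fun a => mu a - nu a)) => //.
  by under eq_bigr do rewrite scalerBl; rewrite sumrB h2 subrr.
by rewrite sumrB h1 subrr.
Qed.

Lemma face_tight (A : {fset V}) w c mu :
  (forall x, conv_hull A x -> dotv w x <= c) ->
  (forall a, a \in A -> 0 <= mu a) -> \sum_(a <- A) mu a = 1 ->
  dotv w (\sum_(a <- A) mu a *: a) = c ->
  forall a, a \in A -> mu a * (c - dotv w a) = 0.
Proof.
move=> hP mu0 mu1 hx; apply: psum0.
  move=> a aA; apply: mulr_ge0; first exact: mu0.
  by rewrite subr_ge0; apply: hP; exact: conv_mem.
under eq_bigr do rewrite mulrBr.
by rewrite sumrB -big_distrl /= mu1 mul1r -dotv_sumr hx subrr.
Qed.

Lemma fsetIs_sub (A : {fset V}) G : (fsetIs A G `<=` A)%fset.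
Proof. by apply/fsubsetP => x; rewrite in_fsetIs => /andP[]. Qed.

Lemma face_conv (A : {fset V}) G : face (conv_hull A) G -> conv_hull (fsetIs A G) = G.
Proof.
case=> w [c [hwc GE]]; apply/seteqP; split => x.
  case=> l [l0 [l1 xE]]; rewrite GE.
  pose l' a := if a \in fsetIs A G then l a else 0.
  have s1 : \sum_(a <- fsetIs A G) l a = \sum_(a <- A) l' a.
    transitivity (\sum_(a <- fsetIs A G) l' a).
      by rewrite big_seq [RHS]big_seq; apply: eq_bigr => a aG; rewrite /l' aG.
    apply: big_fset_incl; first exact: fsetIs_sub.
    by move=> a _ /negbTE h; rewrite /l' h.
  have s2 : \sum_(a <- fsetIs A G) l a *: a = \sum_(a <- A) l' a *: a.
    transitivity (\sum_(a <- fsetIs A G) l' a *: a).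
      by rewrite big_seq [RHS]big_seq; apply: eq_bigr => a aG; rewrite /l' aG.
    apply: big_fset_incl; first exact: fsetIs_sub.
    by move=> a _ /negbTE h; rewrite /l' h scale0r.
  split.
    exists l'; split. move=> a _; rewrite /l'. case: ifP => h; [exact: (l0 a h) | exact: lexx].
    by split; [rewrite -s1 | rewrite xE s2].
  rewrite xE dotv_sumr -[RHS]mul1r -l1 big_distrl /=.
  rewrite big_seq [RHS]big_seq; apply: eq_bigr => a aG; congr (_ * _).
  by move: aG; rewrite in_fsetIs GE => /andP[_ /asboolP []].
rewrite {1}GE; case=> [[mu [mu0 [mu1 xE]]] hx].
have hT := face_tight hwc mu0 mu1.
rewrite -xE in hT; have {}hT := hT hx.
have muz : forall a, a \in A -> a \notin fsetIs A G -> mu a = 0.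
  move=> a aA; rewrite in_fsetIs aA /= => /asboolPn nG.
  move/eqP: (hT a aA); rewrite mulf_eq0 => /orP [/eqP //|].
  rewrite subr_eq0 => /eqP hc; exfalso; apply: nG; rewrite GE; split.
    exact: conv_mem.
  by rewrite hc.
exists mu; split; first by move=> a /(fsubsetP (fsetIs_sub A G)); exact: mu0.
split.
  rewrite (big_fset_incl _ (fsetIs_sub A G)) //.
rewrite xE (big_fset_incl _ (fsetIs_sub A G)) //.
by move=> a aA naG; rewrite muz // scale0r.
Qed.
End Geo.
Section Geo2.
Variables (R : realType) (n : nat).
Notation V := 'rV[R]_n.

Lemma face_supp (A : {fset V}) b (lam : V -> R) G : aff_indep A ->
  (forall a, a \in A -> 0 <= lam a) -> \sum_(a <- A) lam a = 1 ->
  b = \sum_(a <- A) lam a *: a ->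
  face (conv_hull A) G -> relint G b -> forall a, a \in A -> (G a <-> 0 < lam a).
Proof.
move=> hA l0 l1 bE [w [c [hwc GE]]] [Gb [e [e0 he]]] a aA; split.
  move=> Ga.
  pose D := \sum_(j < n) `|b 0 j - a 0 j|.
  have D0 : 0 <= D by apply: sumr_ge0 => j _.
  have D1 : 0 < D + 1 by lra.
  pose eps := e / (D + 1).
  have eps0 : 0 < eps by rewrite divr_gt0.
  have epsE : eps * (D + 1) = e by rewrite /eps divfK // gt_eqF.
  pose y := (1 + eps) *: b - eps *: a.
  have Gy : G y.
    apply: he.
      exists 2%N, (fun i : 'I_2 => if i == ord0 then b else a),
        (fun i : 'I_2 => if i == ord0 then 1 + eps else - eps).
      split; first by move=> i; case: ifP.
      split; first by rewrite !big_ord_recl big_ord0 /= addr0 addrK.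
      by rewrite !big_ord_recl big_ord0 /= addr0 scaleNr.
    move=> j; rewrite /y !mxE.
    have -> : (1 + eps) * b 0 j - eps * a 0 j - b 0 j = eps * (b 0 j - a 0 j) by ring.
    rewrite normrM (gtr0_norm eps0).
    have hb : `|b 0 j - a 0 j| <= D.
      by rewrite /D (bigD1 j) //= lerDl sumr_ge0.
    have := ler_wpM2l (ltW eps0) hb.
    move: epsE; rewrite mulrDr mulr1 => epsE.
    lra.
  move: Gy; rewrite GE => -[[mu [mu0 [mu1 yE]]] _].
  have := @bary_unique R n A (fun a' => (1 + eps) * lam a' - eps * (a' == a)%:R) mu hA.
  move=> /(_ _ _ a aA) /=; rewrite eqxx mulr1 => H.
  have mua := mu0 a aA.
  rewrite lt_def l0 // andbT; apply/eqP => la0.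
  have : (1 + eps) * lam a - eps = mu a.
    apply: H.
      rewrite sumrB -!mulr_sumr l1 mu1 (big_fset_one (a := a)) ?eqxx //.
        by rewrite !mulr1 addrK.
      by move=> x _ /negbTE ->; rewrite mulr0n.
    rewrite -yE /y.
    under eq_bigr do rewrite scalerBl -!scalerA.
    rewrite sumrB -!scaler_sumr -bE (big_fset_one (a := a)) ?eqxx ?scale1r ?scalerA //.
    by move=> x _ /negbTE ->; rewrite scale0r.
  rewrite la0 mulr0; lra.
move=> lpos; rewrite GE; split; first exact: conv_mem.
move: Gb; rewrite GE => -[_ hb].
have := face_tight hwc l0 l1; rewrite -bE => /(_ hb a aA) /eqP.
by rewrite mulf_eq0 (gt_eqF lpos) /= subr_eq0 => /eqP <-.
Qed.

End Geo2.
Section Geo3.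
Variables (R : realType) (n : nat).
Notation V := 'rV[R]_n.

Definition fmin (s : seq V) (P : V -> bool) (F : V -> R) : R :=
  foldr (fun a acc => if P a then Order.min (F a) acc else acc) 1 s.

Lemma fmin_gt0 (s : seq V) (P : V -> bool) (F : V -> R) : (forall a, a \in s -> P a -> 0 < F a) -> 0 < fmin s P F.
Proof.
elim: s => [|a s IH] h /=; first exact: ltr01.
have IH' : 0 < fmin s P F by apply: IH => x xs; apply: h; rewrite inE xs orbT.
case: ifP => // Pa; rewrite lt_min IH' andbT; apply: h => //; exact: mem_head.
Qed.

Lemma fmin_le (s : seq V) (P : V -> bool) (F : V -> R) a : a \in s -> P a -> fmin s P F <= F a.
Proof.
elim: s => [|x s IH] //=; rewrite inE => /orP [/eqP <- Pa|xs Pa].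
  by rewrite Pa ge_min lexx.
case: ifP => _; last exact: IH.
by rewrite ge_min (IH xs Pa) orbT.
Qed.

Lemma dotv_bound (u z : V) e : (forall j, `|z 0 j| < e) ->
  `|dotv u z| <= (\sum_(j < n) `|u 0 j|) * e.
Proof.
move=> hz; apply: le_trans (ler_norm_sum _ _ _) _.
rewrite big_distrl /=; apply: ler_sum => j _.
by rewrite normrM; apply: ler_wpM2l => //; exact: ltW.
Qed.

Lemma face_exists (A : {fset V}) b (lam : V -> R) : aff_indep A ->
  (forall a, a \in A -> 0 <= lam a) -> \sum_(a <- A) lam a = 1 ->
  b = \sum_(a <- A) lam a *: a ->
  exists G, face (conv_hull A) G /\ relint G b.
Proof.
move=> hA l0 l1 bE.
pose v a : R := if 0 < lam a then 0 else -1.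
have [u [k huk]] := aff_solve hA v.
have hex : forall a, exists p : V * R, a \in A -> forall a', a' \in A ->
    dotv p.1 a' + p.2 = (a' == a)%:R.
  move=> a; have [u' [k' h]] := aff_solve hA (fun a' => (a' == a)%:R).
  by exists (u', k') => _ a' /h.
have [UK hUK] := choice hex.
have v0 : forall a, v a <= 0 by move=> a; rewrite /v; case: ifP => _; lra.
have lv : forall a, a \in A -> lam a * v a = 0.
  move=> a aA; rewrite /v; case: ifP => [_|h]; first by rewrite mulr0.
  have := l0 a aA; rewrite le_eqVlt h orbF => /eqP <-; by rewrite mul0r.
pose G0 := [set x | conv_hull A x /\ dotv u x = - k].
have dconv : forall mu, \sum_(a <- A) mu a = 1 ->
    dotv u (\sum_(a <- A) mu a *: a) + k = \sum_(a <- A) mu a * v a.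
  move=> mu h1; rewrite dotv_conv // big_seq [RHS]big_seq.
  by apply: eq_bigr => a aA; rewrite huk.
have convle : forall x, conv_hull A x -> dotv u x <= - k.
  move=> x [mu [mu0 [mu1 ->]]]; have := dconv mu mu1.
  have : \sum_(a <- A) mu a * v a <= 0.
    by rewrite big_seq; apply: sumr_le0 => a aA; apply: mulr_ge0_le0; [exact: mu0|exact: v0].
  lra.
exists G0; split; first by exists u, (- k).
have bary : forall mu a, a \in A -> \sum_(a' <- A) mu a' = 1 ->
    dotv (UK a).1 (\sum_(a' <- A) mu a' *: a') + (UK a).2 = mu a.
  move=> mu a aA h1; rewrite dotv_conv // big_seq.
  under eq_bigr => a' a'A do rewrite (hUK a aA a' a'A).
  rewrite -big_seq (big_fset_one (a := a)) ?eqxx ?mulr1 //.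
  by move=> x _ /negbTE ->; rewrite mulr0.
split.
  split; first by exists lam.
  have := dconv lam l1; rewrite -bE big_seq big1 => [|a aA]; last exact: lv.
  lra.
pose N a := \sum_(j < n) `|(UK a).1 0 j|.
have N0 : forall a, 0 <= N a by move=> a; apply: sumr_ge0 => j _.
pose e := fmin A (fun a => 0 < lam a) (fun a => lam a / (1 + N a)).
have e0 : 0 < e.
  apply: fmin_gt0 => a _ la; apply: divr_gt0 => //.
  by have := N0 a; lra.
exists e; split => // y [m [p [l [Gp [l1' yE]]]]] hy.
have : forall i, exists mu : V -> R, (forall a, a \in A -> 0 <= mu a) /\
    \sum_(a <- A) mu a = 1 /\ p i = \sum_(a <- A) mu a *: a /\
    forall a, a \in A -> ~~ (0 < lam a) -> mu a = 0.
  move=> i; case: (Gp i) => [[mu [mu0 [mu1 pE]]] hp].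
  exists mu; do 3 split => //.
  move=> a aA nl.
  have h := dconv mu mu1; rewrite -pE hp addNr in h.
  have := psum0 (F := fun a => - (mu a * v a)) _ _ aA.
  rewrite /v (negbTE nl) mulrN1 opprK; apply.
    move=> x xA; rewrite oppr_ge0; apply: mulr_ge0_le0; [exact: mu0|exact: v0].
  by rewrite sumrN -h oppr0.
move=> /choice [mus hmus].
pose nu a := \sum_(i < m) l i * mus i a.
have nu1 : \sum_(a <- A) nu a = 1.
  rewrite /nu exchange_big /= -l1'; apply: eq_bigr => i _.
  by rewrite -mulr_sumr (proj1 (proj2 (hmus i))) mulr1.
have yE' : y = \sum_(a <- A) nu a *: a.
  rewrite yE /nu; under [RHS]eq_bigr do rewrite scaler_suml.
  rewrite exchange_big /=; apply: eq_bigr => i _.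
  rewrite (proj1 (proj2 (proj2 (hmus i)))) scaler_sumr; apply: eq_bigr => a _.
  by rewrite scalerA.
have nuz : forall a, a \in A -> ~~ (0 < lam a) -> nu a = 0.
  move=> a aA lpos; rewrite /nu big1 // => i _.
  by rewrite (proj2 (proj2 (proj2 (hmus i))) a aA lpos) mulr0.
have nu0 : forall a, a \in A -> 0 <= nu a.
  move=> a aA; case: (boolP (0 < lam a)) => lpos; last by rewrite nuz.
  have hn : nu a - lam a = dotv (UK a).1 (y - b).
    rewrite dotvBr -{1}(bary nu a aA nu1) -yE' -{1}(bary lam a aA l1) -bE.
    by rewrite opprD addrACA subrr addr0.
  have hb : `|dotv (UK a).1 (y - b)| <= N a * e.
    by apply: dotv_bound => j; rewrite !mxE; exact: hy.
  have he : e <= lam a / (1 + N a) by apply: fmin_le.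
  rewrite ler_pdivlMr in he; last by have := N0 a; lra.
  move: hb; rewrite ler_norml => /andP[hb _].
  move: he; rewrite mulrDr mulr1 [e * _]mulrC => he.
  lra.
split.
  by exists nu; split => //; split.
have := dconv nu nu1; rewrite -yE' big_seq big1 => [|a aA]; first lra.
by case: (boolP (0 < lam a)) => lpos; [rewrite /v lpos mulr0 | rewrite nuz // mul0r].
Qed.
End Geo3.
Section Geo4.
Variables (R : realType) (n : nat).
Notation V := 'rV[R]_n.

Lemma aff_indep_sub (A B : {fset V}) : (B `<=` A)%fset -> aff_indep A -> aff_indep B.
Proof.
move=> sub hA l h1 h2 a aB.
pose l' x := if x \in B then l x else 0.
have := hA l' _ _ a (fsubsetP sub a aB); rewrite /l' aB; apply.
  rewrite -(big_fset_incl _ sub); last by move=> x _ /negbTE ->; rewrite scale0r.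
  by rewrite -[RHS]h1; apply: eq_big_seq => x xB; rewrite xB.
rewrite -(big_fset_incl _ sub); last by move=> x _ /negbTE ->.
by rewrite -[RHS]h2; apply: eq_big_seq => x xB; rewrite xB.
Qed.

Lemma conv_add_point (B : {fset V}) b : b \notin B -> conv_hull B b ->
  conv_hull (B `|` [fset b])%fset = conv_hull B.
Proof.
move=> bB [lam [l0 [l1 bE]]]; rewrite fsetUC; apply/seteqP; split => x.
  case=> mu [mu0 [mu1 xE]].
  rewrite big_fsetU1 // in mu1; rewrite big_fsetU1 // in xE.
  have mub : 0 <= mu b by apply: mu0; rewrite !inE eqxx.
  exists (fun a => mu a + mu b * lam a); split.
    move=> a aB; apply: addr_ge0; first by apply: mu0; rewrite !inE aB orbT.
    by apply: mulr_ge0 => //; exact: l0.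
  split.
    by rewrite big_split /= -mulr_sumr l1 mulr1 [_ + mu b]addrC.
  rewrite xE [X in mu b *: X]bE scaler_sumr -big_split /=; apply: eq_bigr => a _.
  by rewrite scalerDl scalerA addrC.
case=> mu [mu0 [mu1 xE]].
exists (fun a => if a \in B then mu a else 0); split.
  by move=> a _; case: ifP => h; [exact: mu0 | exact: lexx].
rewrite !big_fsetU1 //= (negbTE bB) add0r scale0r add0r; split.
  by rewrite -[RHS]mu1; apply: eq_big_seq => a aB; rewrite aB.
by rewrite xE; apply: eq_big_seq => a aB; rewrite aB.
Qed.

End Geo4.
Unset Implicit Arguments. Set Strict Implicit. Set Printing Implicit Defensive.
Theorem proposition3p10 (R : realType) (n : nat) (Ap Am : {fset 'rV[R]_n})
  (f : 'rV[R]_n -> R) :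
  ext_circuit Ap Am -> Am != fset0 ->
  signomial Ap Am f -> Sing_pos f !=set0 ->
  (exists q : 'rV[R]_n -> 'rV[R]_n -> R,
     (forall b, b \in Am ->
        (exists G : set 'rV[R]_n, face (conv_hull Ap) G /\ relint G b) /\
        forall G : set 'rV[R]_n, face (conv_hull Ap) G -> relint G b ->
          circuit_signomial (fsetIs Ap G) [fset b]%fset (q b)
          /\ copositive (q b)) /\
     forall x, pos_orthant x -> f x = \sum_(b <- Am) q b x)
  /\ SONC f.
Proof.
move=> [Hdis Hor] Am0 [c [cpos fE]] [xs [pxs [f0 fdiff]]].
have bnA : forall b, b \in Am -> b \notin Ap.
  move=> b bAm; apply/negP => bAp.
  have : b \in (Ap `&` Am)%fset by rewrite in_fsetI bAp bAm.
  by rewrite Hdis inE.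
have [Ap0 [HAi Hconv]] : simplex_with_vertices (Ap `|` Am)%fset Ap.
  case: Hor => // /andP [/eqP h1 /eqP h2]; exfalso.
  have := cardfsUI Ap Am; rewrite h1 h2 Hdis cardfs0 addn0.
  move=> /(congr1 (fun k => (k - 1)%N)); rewrite /= addKn subnn => /esym/eqP.
  rewrite cardfs_eq0 => /eqP h.
  by move: Am0; rewrite h eqxx.
have hlam : forall b, exists l : 'rV[R]_n -> R, b \in Am ->
    (forall a, a \in Ap -> 0 <= l a) /\ \sum_(a <- Ap) l a = 1 /\
    b = \sum_(a <- Ap) l a *: a.
  move=> b; case: (boolP (b \in Am)) => bAm; last by exists (fun _ => 0).
  have : conv_hull Ap b by rewrite -Hconv; apply: conv_mem; rewrite in_fsetU bAm orbT.
  by case=> l hl; exists l.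
have [lam Hlam] := choice hlam.
pose d a := c a * mono xs a.
have mpos : forall a, 0 < mono xs a by move=> a; exact: mono_gt0.
have dpos : forall a, a \in (Ap `|` Am)%fset -> 0 < d a.
  by move=> a aA; apply: mulr_gt0; [exact: cpos | exact: mpos].
have E0 : \sum_(a <- Ap) d a = \sum_(b <- Am) d b.
  by move: f0; rewrite fE // => /eqP; rewrite subr_eq0 => /eqP.
have Ei : forall i, \sum_(a <- Ap) d a * a 0 i = \sum_(b <- Am) d b * b 0 i.
  move=> i; have := fdiff i; rewrite (xdiff_sig i fE pxs) => /eqP; rewrite subr_eq0 => /eqP.
  have hs : forall s : seq 'rV[R]_n, \sum_(a <- s) c a * (a 0 i * mono xs a) =
      \sum_(a <- s) d a * a 0 i.
    by move=> s; apply: eq_bigr => a _; rewrite /d; ring.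
  by rewrite !hs.
have dE : forall a, a \in Ap -> d a = \sum_(b <- Am) d b * lam b a.
  move=> a aAp; apply/eqP; rewrite -subr_eq0; apply/eqP.
  apply: (HAi (fun a => d a - \sum_(b <- Am) d b * lam b a)) => //.
    apply/rowP => i; rewrite coord_sum mxE.
    under eq_bigr do rewrite mulrBl.
    rewrite sumrB Ei; apply/eqP; rewrite subr_eq0; apply/eqP.
    under [RHS]eq_bigr do rewrite mulr_suml.
    rewrite [RHS]exchange_big /= big_seq [RHS]big_seq; apply: eq_bigr => b bAm.
    have [_ [_ bE]] := Hlam b bAm.
    transitivity (d b * (\sum_(a <- Ap) lam b a *: a) 0 i); first by rewrite -bE.
    by rewrite coord_sum mulr_sumr; apply: eq_bigr => a' _; rewrite mulrA.
  rewrite sumrB E0 exchange_big /=; apply/eqP; rewrite subr_eq0; apply/eqP.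
  rewrite big_seq [RHS]big_seq; apply: eq_bigr => b bAm.
  have [_ [l1 _]] := Hlam b bAm.
  by rewrite -mulr_sumr l1 mulr1.
pose q (b x : 'rV[R]_n) := \sum_(a <- Ap) (d b * lam b a / mono xs a) * mono x a
  - c b * mono x b.
have qsum : forall x, pos_orthant x -> f x = \sum_(b <- Am) q b x.
  move=> x px; rewrite fE // /q sumrB; congr (_ - _).
  rewrite [RHS]exchange_big /= big_seq [RHS]big_seq; apply: eq_bigr => a aAp.
  rewrite -mulr_suml -mulr_suml -dE // /d mulfK //; exact: lt0r_neq0.
have qcop : forall b, b \in Am -> copositive (q b).
  move=> b bAm x px; have [l0 [l1 bE]] := Hlam b bAm.
  pose D := lnv x - lnv xs.
  have hr : forall a, mono x a = mono xs a * expR (dotv a D).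
    move=> a; rewrite !mono_exp // /D dotvBr expRB.
    by rewrite mulrC divfK // gt_eqF // expR_gt0.
  rewrite /q hr.
  under eq_bigr do rewrite hr mulrA divfK ?lt0r_neq0 // -mulrA.
  rewrite -mulr_sumr mulrA -/(d b) -mulrBr; apply: mulr_ge0.
    by apply: ltW; apply: dpos; rewrite in_fsetU bAm orbT.
  rewrite subr_ge0.
  have tb : dotv b D = \sum_(a <- Ap) lam b a * dotv a D by rewrite {1}bE dotv_suml.
  by rewrite tb; apply: jensen_exp.
have main : forall b, b \in Am ->
    (exists G : set 'rV[R]_n, face (conv_hull Ap) G /\ relint G b) /\
    forall G : set 'rV[R]_n, face (conv_hull Ap) G -> relint G b ->
      circuit_signomial (fsetIs Ap G) [fset b]%fset (q b) /\ copositive (q b).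
  move=> b bAm; have [l0 [l1 bE]] := Hlam b bAm.
  split; first exact: face_exists HAi l0 l1 bE.
  move=> G hG hrel; split; last exact: qcop.
  have supp := face_supp HAi l0 l1 bE hG hrel.
  have GE := face_conv hG.
  have Gb : G b := hrel.1.
  have bA' : b \notin fsetIs Ap G by rewrite in_fsetIs (negbTE (bnA b bAm)).
  have lz : forall a, a \in Ap -> ~~ `[< G a >] -> lam b a = 0.
    move=> a aAp /asboolPn nG; apply/eqP; rewrite eq_le l0 // andbT leNgt.
    by apply/negP => /(proj2 (supp a aAp)).
  have A'0 : fsetIs Ap G != fset0.
    apply/fset0Pn; apply: contrapT => nex.
    have : \sum_(a <- Ap) lam b a = 0.
      rewrite big_seq big1 // => a aAp; apply: lz => //; apply/asboolPn => Ga.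
      by apply: nex; exists a; rewrite in_fsetIs aAp; apply/asboolP.
    by rewrite l1 => /eqP; rewrite oner_eq0.
  have disj : (fsetIs Ap G `&` [fset b])%fset = fset0.
    apply/fsetP => x; rewrite in_fsetI in_fset1 inE.
    by apply/negbTE/negP => /andP [xA /eqP xb]; move: xA; rewrite xb (negbTE bA').
  split.
    split => //; right; split; last split.
    - split => //; right; split; first exact: A'0.
      split; first exact: aff_indep_sub (fsetIs_sub Ap G) HAi.
      by apply: conv_add_point => //; rewrite GE.
    - by rewrite cardfs1.
    - by move=> b'; rewrite in_fset1 => /eqP ->; rewrite GE.
  exists (fun a => if a == b then c b else d b * lam b a / mono xs a); split.
    move=> a; rewrite in_fsetU in_fset1 => /orP [aA'|/eqP ->]; last first.
      by rewrite eqxx; apply: cpos; rewrite in_fsetU bAm orbT.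
    have ab : a != b by apply: contraNneq bA' => <-.
    rewrite (negbTE ab); move: aA'; rewrite in_fsetIs => /andP [aAp /asboolP Ga].
    apply: divr_gt0 => //; apply: mulr_gt0; last exact/(supp a aAp).
    by apply: dpos; rewrite in_fsetU bAm orbT.
  move=> x px; rewrite /q big_seq_fset1 eqxx; congr (_ - _).
  rewrite (big_fset_incl _ (fsetIs_sub Ap G)); last first.
    move=> a aAp; rewrite in_fsetIs aAp /= => nG.
    have ab : a != b by apply: contraNneq (bnA b bAm) => <-.
    by rewrite (negbTE ab) lz // mulr0 mul0r mul0r.
  apply: eq_big_seq => a aAp.
  have ab : a != b by apply: contraNneq (bnA b bAm) => <-.
  by rewrite (negbTE ab).
split.
  by exists q; split.
have hG : forall b, exists G : set 'rV[R]_n, b \in Am -> face (conv_hull Ap) G /\ relint G b.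
  move=> b; case: (boolP (b \in Am)) => bAm; last by exists set0.
  by have [[G hG] _] := main b bAm; exists G.
have [Gs hGs] := choice hG.
exists (size Am), (fun j => fsetIs Ap (Gs (nth 0 Am j))), (fun j => [fset nth 0 Am j]%fset),
  (fun j => q (nth 0 Am j)); split.
  move=> j; have bAm : nth 0 Am j \in Am by apply: mem_nth.
  have [hf hr] := hGs _ bAm.
  exact: (proj2 (main _ bAm)) hf hr.
by move=> x px; rewrite qsum // (big_nth 0) big_mkord.
Qed.
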